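(* Let $\ell$ and $m$ be integers with $2\le\ell\le m$, let $G$ be an abelian group written additively, let $\mathbf{a}=(a_1,\dots,a_m)$ be a sequence of elements of $G$, and let $A$ be the set of distinct terms of $\mathbf{a}$. Assume \[ |\Sigma^{\ell}(\mathbf{a})|<\begin{cases}p(G)-1,&\ell=2,\\ p(G),&\ell\ge3,\end{cases} \] that $\mu_{\mathbf{a}}(a)=\ell$ for some $a\in A$, that $|\{a\in A:\mu_{\mathbf{a}}(a)\ge2\}|\ge2$, and that \[ |\Sigma^{\ell}(\mathbf{a})|=\sum_{a\in A}\mu_{\mathbf{a}}(a)-\ell+1 . \] Then $A$ is an arithmetic progression.
   Context: $p(G)$ is the order of the smallest nontrivial subgroup of $G$, or $\infty$ if none exists. $\Sigma^{\ell}(\mathbf{a})$ is the set of all sums $a_{i_1}+\cdots+a_{i_\ell}$ with $1\le i_1<\cdots<i_\ell\le m$. $\rho_a(\mathbf{a})=|\{i:a_i=a\}|$, $\mu_{\mathbf{a}}(a)=\min(\ell,\rho_a(\mathbf{a}))$. An arithmetic progression is a set $\{c+jd:j\in[0,k-1]\}$ with $d\ne0$. *)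

(* Defs.v *)
From mathcomp Require Import all_boot all_order all_algebra.
Set Implicit Arguments. Unset Strict Implicit. Unset Printing Implicit Defensive.
Import GRing.Theory.
Local Open Scope ring_scope.

Definition sigma_set (G : zmodType) (m l : nat) (a : 'I_m -> G) : seq G :=
  undup [seq (\sum_(i in X) a i) | X : {set 'I_m} <- enum [set X : {set 'I_m} | #|X| == l]].

Definition terms (G : zmodType) (m : nat) (a : 'I_m -> G) : seq G :=
  undup (codom a).

Definition rho (G : zmodType) (m : nat) (a : 'I_m -> G) (x : G) : nat :=
  #|[set i | a i == x]|.

Definition mu (G : zmodType) (m l : nat) (a : 'I_m -> G) (x : G) : nat :=
  minn l (rho a x).

Definition finite_nontrivial_subgroup (G : zmodType) (H : seq G) : Prop :=
  [/\ uniq H, 0 \in H, (forall x y, x \in H -> y \in H -> x - y \in H)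
    & (1 < size H)%N].

Definition is_AP (G : zmodType) (A : seq G) : Prop :=
  exists (c d : G) (k : nat), d != 0 /\
    forall x, x \in A <-> exists2 j : nat, (j < k)%N & x = c + d *+ j.

(* Main.v *)
Require Import Defs.
From mathcomp Require Import all_boot all_order all_algebra.
From mathcomp Require Import finmap zify.
Import GRing.Theory.
Set Implicit Arguments. Unset Strict Implicit. Unset Printing Implicit Defensive.
Local Open Scope fset_scope.
Local Open Scope ring_scope.

Section Basic.
Variable G : zmodType.

Definition small (N : nat) := forall H : seq G,
  finite_nontrivial_subgroup H -> (N < size H)%N.

Lemma small_le N M : small N -> (M <= N)%N -> small M.
Proof. by move=> sN MN H /sN; apply: leq_ltn_trans. Qed.

Lemma mulrn_mod (g : G) k t : g *+ k = 0 -> g *+ t = g *+ (t %% k).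
Proof.
move=> gk; rewrite {1}(divn_eq t k) mulrnDr mulnC mulrnA gk mul0rn add0r //.
Qed.

Lemma cyclic_sub (g : G) n : g != 0 -> (0 < n)%N -> g *+ n = 0 ->
  exists H : seq G, finite_nontrivial_subgroup H /\ (size H <= n)%N.
Proof.
move=> g0 n0 gn.
have exP : exists k, (0 < k)%N && (g *+ k == 0) by exists n; rewrite n0 gn eqxx.
case: (ex_minnP exP) => k /andP[k0 /eqP gk] kmin.
have kmin' : forall j, (0 < j)%N -> g *+ j = 0 -> (k <= j)%N.
  by move=> j j0 gj; apply: kmin; rewrite j0 gj eqxx.
exists [seq g *+ i | i <- iota 0 k]; split; last first.
  by rewrite size_map size_iota; apply: kmin'.
split.
- rewrite map_inj_in_uniq ?iota_uniq // => i j; rewrite !mem_iota /= !add0n.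
  move=> ik jk gij; apply/eqP; rewrite eqn_leq; apply/andP; split; rewrite leqNgt; apply/negP => lt.
  + have := kmin' (i - j)%N; rewrite subn_gt0 lt mulrnBr ?(ltnW lt) // gij subrr.
    by move=> /(_ isT erefl); lia.
  + have := kmin' (j - i)%N; rewrite subn_gt0 lt mulrnBr ?(ltnW lt) // gij subrr.
    by move=> /(_ isT erefl); lia.
- by apply/mapP; exists 0%N; rewrite ?mulr0n // mem_iota k0.
- move=> x y /mapP[i]; rewrite mem_iota add0n /= => ik -> /mapP[j]; rewrite mem_iota add0n /= => jk ->.
  apply/mapP; exists ((i + (k - j)) %% k)%N; first by rewrite mem_iota add0n ltn_pmod.
  rewrite -mulrn_mod // mulrnDr mulrnBr ?(ltnW jk) // gk sub0r //.
- rewrite size_map size_iota; case: k k0 gk {kmin kmin'} => // [[|k]] //.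
  by rewrite mulr1n => _ g0'; rewrite g0' eqxx in g0.
Qed.

Lemma orbit (X : {fset G}) (x0 g : G) : g != 0 ->
  (forall i, (i <= #|` X|)%N -> x0 + g *+ i \in X) ->
  exists H : seq G, finite_nontrivial_subgroup H /\ (size H <= #|` X|)%N.
Proof.
move=> g0 inX.
set s := [seq x0 + g *+ i | i <- iota 0 (#|` X|).+1].
have nu : ~~ uniq s.
  apply/negP => us.
  have : (size s <= size (enum_fset X))%N.
    apply: uniq_leq_size => // z /mapP[i]; rewrite mem_iota add0n /= ltnS => iX ->.
    exact: inX.
  by rewrite size_map size_iota ltnn.
case/(uniqPn 0): nu => i [j [ij js]].
rewrite size_map size_iota in js.
rewrite !(nth_map 0%N) ?size_iota ?(ltn_trans ij) // !nth_iota ?(ltn_trans ij) // !add0n.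
move/addrI => eq.
have [H [HH sH]] := @cyclic_sub g (j - i)%N g0 (ltac:(by rewrite subn_gt0)) (ltac:(by rewrite mulrnBr ?(ltnW ij) // eq subrr)).
exists H; split => //; apply: (leq_trans sH); lia.
Qed.

Lemma periodic (X : {fset G}) (x0 g : G) : x0 \in X -> g != 0 ->
  (forall x, x \in X -> x + g \in X) ->
  exists H : seq G, finite_nontrivial_subgroup H /\ (size H <= #|` X|)%N.
Proof.
move=> x0X g0 stab; apply: (@orbit X x0 g g0) => i _.
elim: i => [|i IH]; first by rewrite mulr0n addr0.
by rewrite mulrSr addrA stab.
Qed.

Implicit Types X Y Z : {fset G}.

Definition sumset X Y : {fset G} := [fset x + y | x in X, y in Y].
Definition trans X (c : G) : {fset G} := [fset x + c | x in X].

Lemma sumsetP X Y z :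
  reflect (exists2 x, x \in X & exists2 y, y \in Y & z = x + y) (z \in sumset X Y).
Proof. exact: imfset2P. Qed.

Lemma mem_sumset X Y x y : x \in X -> y \in Y -> x + y \in sumset X Y.
Proof. by move=> xX yY; apply/sumsetP; exists x => //; exists y. Qed.

Lemma transP X c z : reflect (exists2 x, x \in X & z = x + c) (z \in trans X c).
Proof. exact: imfsetP. Qed.

Lemma mem_trans X c z : (z \in trans X c) = (z - c \in X).
Proof.
apply/transP/idP => [[x xX ->]|zX]; first by rewrite addrK.
by exists (z - c) => //; rewrite subrK.
Qed.

Lemma card_trans X c : #|` trans X c| = #|` X|.
Proof. by rewrite card_imfset //= => x y /addIr. Qed.

Lemma sumset_sub X Y X' Y' : X `<=` X' -> Y `<=` Y' -> sumset X Y `<=` sumset X' Y'.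
Proof.
move=> /fsubsetP sX /fsubsetP sY; apply/fsubsetP => z /sumsetP[x xX [y yY ->]].
by apply: mem_sumset; [apply: sX | apply: sY].
Qed.

Lemma sumsetC X Y : sumset X Y = sumset Y X.
Proof.
apply/fsetP => z; apply/sumsetP/sumsetP => -[x xX [y yY ->]];
  by exists y => //; exists x => //; rewrite addrC.
Qed.

Lemma sumset1 X c : sumset X [fset c] = trans X c.
Proof.
apply/fsetP => z; apply/sumsetP/transP => [[x xX [y /fset1P -> ->]]|[x xX ->]].
  by exists x.
by exists x => //; exists c => //; rewrite in_fset1.
Qed.

Lemma sumset0r X : sumset X [fset 0] = X.
Proof. by apply/fsetP => z; rewrite sumset1 mem_trans subr0. Qed.


Lemma card_sumset_ge X Y y : y \in Y -> (#|` X| <= #|` sumset X Y|)%N.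
Proof.
move=> yY; rewrite -(card_trans X y); apply: fsubset_leq_card.
by apply/fsubsetP => z /transP[x xX ->]; apply: mem_sumset.
Qed.

Lemma card_sumset_ge2 X Y x : x \in X -> (#|` Y| <= #|` sumset X Y|)%N.
Proof. by rewrite sumsetC; apply: card_sumset_ge. Qed.

Definition Xe X Y e := X `|` trans Y e.
Definition Ye X Y e := [fset y in Y | y + e \in X].

Lemma Ye_sub X Y e : Ye X Y e `<=` Y.
Proof. exact: fset_sub. Qed.

Lemma mem_Ye X Y e y : (y \in Ye X Y e) = (y \in Y) && (y + e \in X).
Proof. by rewrite !inE. Qed.

Lemma etrans_sub X Y e : sumset (Xe X Y e) (Ye X Y e) `<=` sumset X Y.
Proof.
apply/fsubsetP => z /sumsetP[x]; rewrite in_fsetU => /orP[xX|/transP[y yY ->]] [y' ];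
  rewrite mem_Ye => /andP[y'Y y'eX] ->.
  exact: mem_sumset.
by rewrite -addrA (addrC e) addrC; apply: mem_sumset.
Qed.

Lemma etrans_card X Y e : (#|` Xe X Y e| + #|` Ye X Y e| = #|` X| + #|` Y|)%N.
Proof.
have -> : #|` Ye X Y e| = #|` X `&` trans Y e|.
  rewrite -(card_trans (Ye X Y e) e); congr #|` _|; apply/fsetP => z.
  by rewrite mem_trans in_fsetI mem_trans mem_Ye subrK andbC.
by rewrite cardfsUI card_trans.
Qed.


Lemma two_elems Y : (2 <= #|` Y|)%N -> exists y, exists2 y', y \in Y & (y' \in Y) && (y' != y).
Proof.
move=> Y2; have : Y != fset0 by rewrite -cardfs_gt0; lia.
case/fset0Pn => y yY; exists y.
have : Y `\ y != fset0 by rewrite -cardfs_gt0; move: Y2; rewrite (cardfsD1 y Y) yY; lia.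
by case/fset0Pn => y'; rewrite in_fsetD1 => /andP[y'y y'Y]; exists y' => //; rewrite y'Y.
Qed.

Lemma card1 Y : Y != fset0 -> (#|` Y| <= 1)%N -> exists y, Y = [fset y].
Proof.
move=> Y0 Y1; apply/cardfs1P; rewrite eqn_leq Y1 cardfs_gt0 //.
Qed.

Lemma CD X Y : X != fset0 -> Y != fset0 -> small #|` sumset X Y| ->
  (#|` X| + #|` Y| <= #|` sumset X Y| + 1)%N.
Proof.
move: {2}#|` Y| (leqnn #|` Y|) => n; elim: n X Y => [|n IH] X Y Yn X0 Y0 sm.
  by move: Y0; rewrite -cardfs_gt0; lia.
case: (leqP #|` Y| 1) => [Y1|Y2].
  have [y ->] := card1 Y0 Y1.
  by rewrite sumset1 card_trans cardfs1.
case: (boolP (has (fun x => has (fun y => Ye X Y (x - y) != Y) (enum_fset Y)) (enum_fset X))).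
  case/hasP => x xX /hasP[y yY neq].
  set Y' := Ye X Y (x - y).
  have y'Y : y \in Y' by rewrite mem_Ye yY addrC subrK.
  have ltY : (#|` Y'| < #|` Y|)%N.
    by apply: fproper_ltn_card; rewrite fproperEneq neq Ye_sub.
  have sub := etrans_sub X Y (x - y).
  have := IH (Xe X Y (x - y)) Y' ltac:(lia).
  have Xe0 : Xe X Y (x - y) != fset0.
    by apply/fset0Pn; exists x; rewrite in_fsetU xX.
  have Y'0 : Y' != fset0 by apply/fset0Pn; exists y.
  move=> /(_ Xe0 Y'0 (small_le sm (fsubset_leq_card sub))).
  have := etrans_card X Y (x - y); have := fsubset_leq_card sub; rewrite -/Y'; lia.
move=> /hasPn allY.
have [y [y' yY /andP[y'Y y'y]]] := two_elems Y2.
have : X != fset0 := X0; case/fset0Pn => x0 x0X.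
have g0 : y' - y != 0 by rewrite subr_eq0.
have stab : forall x, x \in X -> x + (y' - y) \in X.
  move=> x xX; have := allY x xX; move=> /hasPn /(_ y yY); rewrite negbK => /eqP eqY.
  have : y' \in Ye X Y (x - y) by rewrite eqY.
  by rewrite mem_Ye => /andP[_]; rewrite addrCA.
have [H [HH sH]] := periodic x0X g0 stab.
have := sm H HH; have := card_sumset_ge X yY; lia.
Qed.

Definition prog (u d : G) (K : nat) : {fset G} :=
  [fset x in [seq u + d *+ j | j <- iota 0 K]].

Lemma progP u d K z : reflect (exists2 j, (j < K)%N & z = u + d *+ j) (z \in prog u d K).
Proof.
rewrite inE; apply: (iffP mapP) => [[j]|[j jK ->]]; first by rewrite mem_iota add0n => jK ->; exists j.
by exists j; rewrite ?mem_iota ?add0n.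
Qed.

Lemma card_prog u d K : (#|` prog u d K| <= K)%N.
Proof. by rewrite card_fseq (leq_trans (size_undup _)) // size_map size_iota. Qed.

Lemma tool1 X d : d != 0 -> X != fset0 ->
  (#|` X `|` trans X d| <= #|` X| + 1)%N -> small #|` X| ->
  exists u, X = prog u d #|` X|.
Proof.
move=> d0 X0 cU sm.
set D := X `\` trans X d.
have cD : (#|` D| <= 1)%N.
  have := cardfsUI X (trans X d); have := cardfsID (trans X d) X.
  rewrite card_trans /D; lia.
have D0 : D != fset0.
  apply/negP => /eqP D0; case/fset0Pn: X0 => x0 x0X.
  have nd : - d != 0 by rewrite oppr_eq0.
  have st : forall x, x \in X -> x + - d \in X.
    move=> x xX; apply/negPn/negP => nx.
    have : x \in D by rewrite in_fsetD xX mem_trans andbT.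
    by rewrite D0 in_fset0.
  have [H [HH sH]] := periodic x0X nd st.
  by have := sm H HH; lia.
have [u Du] := card1 D0 cD.
exists u; apply/eqP; rewrite eqEfcard card_prog andbT.
apply/fsubsetP => x xX.
have ex : exists j, (j <= #|` X|)%N && (x - d *+ j \notin X).
  case: (boolP (all (fun j => x - d *+ j \in X) (iota 0 (#|` X|).+1))).
    move/allP => allin.
    have nd : - d != 0 by rewrite oppr_eq0.
    have [|H [HH sH]] := @orbit X x (- d) nd.
      by move=> i iX; rewrite mulNrn allin // mem_iota add0n ltnS leq0n.
    by have := sm H HH; lia.
  case/allPn => j; rewrite mem_iota add0n ltnS leq0n /= => jX nj.
  by exists j; rewrite jX nj.
case: (ex_minnP ex) => j /andP[jX nj] jmin.
have j0 : (0 < j)%N by case: j {jX jmin} nj => //; rewrite mulr0n subr0 xX.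
have inj1 : x - d *+ j.-1 \in X.
  apply/negPn/negP => nj1.
  have := jmin j.-1; rewrite nj1 andbT => /(_ ltac:(lia)); lia.
have : x - d *+ j.-1 \in D.
  by rewrite in_fsetD inj1 andbT mem_trans -addrA -opprD -mulrSr prednK.
rewrite Du => /fset1P eq.
apply/progP; exists j.-1; first lia.
by rewrite -eq subrK.
Qed.

Lemma vos_two X y y' : y' != y -> X != fset0 ->
  (#|` sumset X [fset y; y']| <= #|` X| + 1)%N -> small #|` sumset X [fset y; y']| ->
  exists u, X = prog u (y' - y) #|` X|.
Proof.
move=> yy X0 cS sm.
have E : X `|` trans X (y' - y) = trans (sumset X [fset y; y']) (- y).
  apply/fsetP => z; rewrite in_fsetU !mem_trans opprK; apply/orP/sumsetP.
    case=> [zX|zX]; first by exists z => //; exists y => //; rewrite in_fset2 eqxx.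
    by exists (z - (y' - y)) => //; exists y'; rewrite ?in_fset2 ?eqxx ?orbT // opprB -addrA subrK.
  case=> x xX [w]; rewrite in_fset2 => /orP[]/eqP -> eq.
    by left; move/addIr: eq => ->.
  by right; rewrite opprB addrA eq addrK.
apply: tool1 => //; first by rewrite subr_eq0.
  by rewrite E card_trans.
apply: (small_le sm); case/fset0Pn: (X0) => x xX.
by apply: (card_sumset_ge X (y := y)); rewrite in_fset2 eqxx.
Qed.

Lemma vos_final X Y u d K : d != 0 -> X != fset0 -> Y != fset0 ->
  sumset X Y `<=` prog u d K -> (#|` X| + #|` Y| = K + 1)%N -> small (K + 1) ->
  exists u', X = prog u' d #|` X|.
Proof.
move=> d0 X0 Y0 /fsubsetP sub cXY sm.
set W := X `|` trans X d.
have sW : sumset W Y `<=` prog u d (K + 1).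
  apply/fsubsetP => z /sumsetP[w wW [y yY ->]]; move: wW; rewrite in_fsetU => /orP[wX|].
    have /progP[j jK ->] := sub _ (mem_sumset wX yY).
    by apply/progP; exists j => //; lia.
  rewrite mem_trans => wX.
  have /progP[j jK eq] := sub _ (mem_sumset wX yY).
  apply/progP; exists j.+1; first lia.
  by rewrite mulrSr addrA -eq addrAC subrK.
have cW := fsubset_leq_card sW.
have W0 : W != fset0 by apply: (fsubset_neq0 (fsubsetUl _ _)).
have := CD W0 Y0 (small_le sm (leq_trans cW (card_prog _ _ _))).
have := card_prog u d (K + 1) => cP cCD.
apply: tool1 => //; first by rewrite -/W; lia.
apply: (small_le sm); lia.
Qed.


Lemma sumset_two_prog X y y' u : X = prog u (y' - y) #|` X| -> (0 < #|` X|)%N ->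
  sumset X [fset y; y'] = prog (u + y) (y' - y) (#|` X| + 1).
Proof.
move=> Xe X0.
have XP : forall x, reflect (exists2 j, (j < #|` X|)%N & x = u + (y' - y) *+ j) (x \in X).
  by move=> x; have := progP u (y' - y) #|` X| x; rewrite -Xe.
move: XP X0; set d := y' - y; set k := #|` X| => XP X0.
have yd : y' = y + d by rewrite /d addrC subrK.
apply/fsetP => z; apply/sumsetP/progP.
  case=> x /XP[j jk ->] [w]; rewrite in_fset2 => /orP[]/eqP -> ->.
    by exists j; [lia | rewrite addrAC].
  by exists j.+1; [lia | rewrite yd mulrSr addrACA].
case=> j jk ->; case: (ltnP j k) => jk'.
  exists (u + d *+ j); first by apply/XP; exists j.
  by exists y; rewrite ?in_fset2 ?eqxx // addrAC.
exists (u + d *+ j.-1); first by apply/XP; exists j.-1 => //; lia.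
exists y'; rewrite ?in_fset2 ?eqxx ?orbT //.
have -> : j = j.-1.+1 by lia.
by rewrite yd mulrSr addrACA.
Qed.

Lemma vosper1 X Y : (2 <= #|` X|)%N -> (2 <= #|` Y|)%N ->
  (#|` sumset X Y| + 1 = #|` X| + #|` Y|)%N -> small #|` sumset X Y| ->
  exists u d, d != 0 /\ sumset X Y = prog u d #|` sumset X Y|.
Proof.
move: {2}#|` Y| (leqnn #|` Y|) => n; elim: n X Y => [|n IH] X Y Yn X2 Y2 tight sm.
  lia.
have X0 : X != fset0 by rewrite -cardfs_gt0; lia.
have Y0 : Y != fset0 by rewrite -cardfs_gt0; lia.
case: (leqP #|` Y| 2) => [Yle2|Y3].
  have [y [y' yY /andP[y'Y y'y]]] := two_elems Y2.
  have EY : Y = [fset y; y'].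
    apply/eqP; rewrite eq_sym eqEfcard cardfs2 eq_sym y'y Yle2 andbT.
    by apply/fsubsetP => z; rewrite in_fset2 => /orP[]/eqP ->.
  have c2 : #|` [fset y; y']| = 2 by rewrite cardfs2 eq_sym y'y.
  rewrite EY c2 in tight sm *.
  have [|u Xe] := vos_two y'y X0 _ sm; first lia.
  exists (u + y), (y' - y); split; first by rewrite subr_eq0.
  have -> : #|` sumset X [fset y; y']| = (#|` X| + 1)%N by lia.
  by rewrite (sumset_two_prog Xe) ?cardfs_gt0.
case: (boolP (has (fun x => has (fun y => (2 <= #|` Ye X Y (x - y)|)%N && (Ye X Y (x - y) != Y))
    (enum_fset Y)) (enum_fset X))).
  case/hasP => x xX /hasP[y yY /andP[Y'2 neq]].
  move: Y'2 neq; set Y' := Ye X Y (x - y); set X' := Xe X Y (x - y) => Y'2 neq.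
  have ltY : (#|` Y'| < #|` Y|)%N.
    by apply: fproper_ltn_card; rewrite fproperEneq neq Ye_sub.
  have sub := etrans_sub X Y (x - y); rewrite -/X' -/Y' in sub.
  have cE := etrans_card X Y (x - y); rewrite -/X' -/Y' in cE.
  have X'0 : X' != fset0 by apply/fset0Pn; exists x; rewrite in_fsetU xX.
  have Y'0 : Y' != fset0 by rewrite -cardfs_gt0; lia.
  have cs := fsubset_leq_card sub.
  have cd := CD X'0 Y'0 (small_le sm cs).
  have cX' : (#|` X| <= #|` X'|)%N by apply: fsubset_leq_card; apply: fsubsetUl.
  have eqS : sumset X' Y' = sumset X Y.
    by apply/eqP; rewrite eqEfcard sub /=; move: cd; rewrite cE -tight leq_add2r.
  rewrite -eqS; apply: IH; rewrite ?eqS //; lia.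
move=> /hasPn allN; exfalso.
have [y1 y1Y] : exists y1, y1 \in Y by apply/fset0Pn.
set XF := [fset x in X | Ye X Y (x - y1) == Y].
set XL := X `\` XF.
have XFP : forall x, (x \in XF) = (x \in X) && (Ye X Y (x - y1) == Y).
  by move=> x; rewrite !inE.
have cXFL : (#|` XF| + #|` XL| = #|` X|)%N.
  have sXF : XF `<=` X := fset_sub _ _.
  rewrite /XL (cardfsDS sXF); have := fsubset_leq_card sXF; lia.
have sF : sumset XF Y `<=` trans X y1.
  apply/fsubsetP => z /sumsetP[x]; rewrite XFP => /andP[xX /eqP eY] [y yY ->].
  rewrite mem_trans; have : y \in Ye X Y (x - y1) by rewrite eY.
  by rewrite mem_Ye => /andP[_]; rewrite addrCA -addrA (addrC y) addrA.
have sL : [disjoint trans X y1 & sumset XL (Y `\ y1)]%fset.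
  apply/fdisjointP => z; rewrite mem_trans => zX; apply/negP => /sumsetP[x].
  rewrite in_fsetD XFP => /andP[nF xX] [y]; rewrite in_fsetD1 => /andP[yy1 yY] zE.
  rewrite xX /= in nF.
  have := allN x xX; move=> /hasPn /(_ y1 y1Y); rewrite negb_and.
  rewrite nF orbF -ltnNge ltnS => c1.
  have : [fset y; y1] `<=` Ye X Y (x - y1).
    apply/fsubsetP => w; rewrite in_fset2 => /orP[]/eqP ->; rewrite mem_Ye ?y1Y ?yY /=.
      by rewrite addrCA addrA -zE.
    by rewrite addrC subrK.
  by move/fsubset_leq_card; rewrite cardfs2 yy1 => c2; have := leq_trans c2 c1.
have cL : (#|` X| + #|` sumset XL (Y `\ y1)| <= #|` sumset X Y|)%N.
  have := cardfsUI (trans X y1) (sumset XL (Y `\ y1)).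
  move: sL; rewrite -fsetI_eq0 => /eqP ->; rewrite cardfs0 card_trans addn0 => <-.
  apply: fsubset_leq_card; apply/fsubsetP => z; rewrite in_fsetU => /orP[|].
    by move=> /transP[x xX ->]; apply: mem_sumset.
  by apply/fsubsetP: z; apply: sumset_sub; [apply: fsubsetDl | apply: fsubD1set].
have cY1 : #|` Y `\ y1| = (#|` Y| - 1)%N by rewrite (cardfsD1 y1 Y) y1Y; lia.
have cXY : (#|` X| <= #|` sumset X Y|)%N := card_sumset_ge X y1Y.
case: (boolP (XF == fset0)) => [/eqP F0|F0].
  move: cXFL; rewrite F0 cardfs0 add0n => cXL.
  have L0 : XL != fset0 by rewrite -cardfs_gt0; lia.
  have Y10 : Y `\ y1 != fset0 by rewrite -cardfs_gt0; lia.
  have smL : small #|` sumset XL (Y `\ y1)| by apply: (small_le sm); lia.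
  have := CD L0 Y10 smL; lia.
have := fsubset_leq_card sF; rewrite card_trans => cF'.
have smF : small #|` sumset XF Y| by apply: (small_le sm); lia.
have cF := CD F0 Y0 smF.
case: (boolP (XL == fset0)) => [/eqP L0|L0].
  move: cXFL; rewrite L0 cardfs0; lia.
have Y10 : Y `\ y1 != fset0 by rewrite -cardfs_gt0; lia.
have smL : small #|` sumset XL (Y `\ y1)| by apply: (small_le sm); lia.
have := CD L0 Y10 smL; lia.
Qed.


Lemma vosper X Y : (2 <= #|` X|)%N -> (2 <= #|` Y|)%N ->
  (#|` sumset X Y| + 1 = #|` X| + #|` Y|)%N -> small (#|` sumset X Y| + 1) ->
  exists u d, d != 0 /\ X = prog u d #|` X|.
Proof.
move=> X2 Y2 tight sm.
have [u [d [d0 E]]] := vosper1 X2 Y2 tight (small_le sm (leq_addr _ _)).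
have X0 : X != fset0 by rewrite -cardfs_gt0; lia.
have Y0 : Y != fset0 by rewrite -cardfs_gt0; lia.
have sub : sumset X Y `<=` prog u d #|` sumset X Y|.
  by apply/fsubsetP => z; rewrite {1}E.
have [u' Xe] := vos_final d0 X0 Y0 sub (esym tight) sm.
by exists u', d.
Qed.

Lemma vosper_two X Y : X != fset0 -> #|` Y| = 2 ->
  (#|` sumset X Y| + 1 <= #|` X| + #|` Y|)%N -> small #|` sumset X Y| ->
  exists u d, d != 0 /\ X = prog u d #|` X|.
Proof.
move=> X0 Y2 tight sm.
have [y [y' yY /andP[y'Y y'y]]] := two_elems (Y := Y) (ltac:(by rewrite Y2)).
have EY : Y = [fset y; y'].
  apply/eqP; rewrite eq_sym eqEfcard cardfs2 eq_sym y'y Y2 leqnn andbT.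
  by apply/fsubsetP => z; rewrite in_fset2 => /orP[]/eqP ->.
have c2 : #|` [fset y; y']| = 2 by rewrite cardfs2 eq_sym y'y.
rewrite EY c2 in tight sm.
have [|u Xe] := vos_two y'y X0 _ sm; first lia.
by exists u, (y' - y); split => //; rewrite subr_eq0.
Qed.

End Basic.

Ltac revert_nat := repeat match goal with
 | H : is_true (leq _ _) |- _ => revert H
 | H : @eq nat _ _ |- _ => revert H
 end.
Ltac cardify := repeat match goal with
 | |- context [ @size _ (@enum_fset _ ?X) ] =>
     let c := fresh "c" in set c := (@size _ (@enum_fset _ X)); clearbody c
 | |- context [ @bigop.body nat ?I ?idx ?r ?F ] =>
     let c := fresh "c" in set c := (@bigop.body nat I idx r F); clearbody c
 end.
Ltac clia := revert_nat; cardify; lia.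

Section Main.
Variables (G : zmodType) (m : nat) (a : 'I_m -> G).

Definition cnt (X : {set 'I_m}) (v : G) := #|[set i in X | a i == v]|.

Definition cntF (F : seq {fset G}) (v : G) := count (fun B : {fset G} => v \in B) F.

Lemma family_real (F : seq {fset G}) :
  (forall v, (cntF F v <= rho a v)%N) ->
  forall s, s \in foldr (@sumset G) [fset 0] F ->
  exists X : {set 'I_m}, [/\ #|X| = size F, \sum_(i in X) a i = s &
     forall v, (cnt X v <= cntF F v)%N].
Proof.
elim: F => [|B F IH] cF s /=.
  move=> /fset1P ->; exists set0; split; rewrite ?cards0 ?big_set0 // => v.
  by rewrite /cnt (_ : [set i in set0 | _] = set0) ?cards0 //; apply/setP => i; rewrite !inE.
case/sumsetP => v vB [t tF ->].
have cF' : forall w, (cntF F w <= rho a w)%N.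
  by move=> w; apply: leq_trans (cF w); rewrite /cntF /=; apply: leq_addl.
have [X [cX sX cntX]] := IH cF' t tF.
have : ~~ ([set i | a i == v] \subset X).
  apply/negP => /subsetP sub.
  have : (rho a v <= cnt X v)%N.
    rewrite /rho /cnt; apply: subset_leq_card; apply/subsetP => i; rewrite !inE => e.
    by rewrite e andbT; apply: sub; rewrite inE.
  have := cntX v; have := cF v; rewrite /cntF /= vB /=; lia.
case/subsetPn => i; rewrite inE => /eqP ai iX.
exists (i |: X); split.
- by rewrite cardsU1 iX cX.
- by rewrite big_setU1 //= ai sX.
- move=> w; rewrite /cntF /=.
  case: (eqVneq w v) => [->|wv].
    rewrite vB /=.
    have : (cnt (i |: X) v <= cnt X v + 1)%N.
      rewrite /cnt; apply: leq_trans (_ : #|i |: [set j in X | a j == v]| <= _)%N.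
        by apply: subset_leq_card; apply/subsetP => j; rewrite !inE => /andP[/orP[->|->] ->]; rewrite ?orbT.
      by rewrite cardsU1; case: (_ \notin _); rewrite /= ?addn1 ?add1n // ?add0n ?addn0.
    have := cntX v; rewrite -/(cntF F v); lia.
  apply: (leq_trans (_ : cnt (i |: X) w <= cnt X w)%N); last first.
    by apply: leq_trans (cntX w) _; apply: leq_addl.
  rewrite /cnt; apply: subset_leq_card; apply/subsetP => j; rewrite !inE => /andP[/orP[/eqP ->|->] aw] //.
  by move: aw; rewrite ai eq_sym (negbTE wv).
Qed.


Lemma card_sigma l : #|` [fset x in sigma_set l a]| = size (sigma_set l a).
Proof. by rewrite card_fseq undup_id // /sigma_set undup_uniq. Qed.

Lemma foldr_sub_sigma l (F : seq {fset G}) :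
  (forall v, (cntF F v <= rho a v)%N) -> size F = l ->
  foldr (@sumset G) [fset 0] F `<=` [fset x in sigma_set l a].
Proof.
move=> cF sF; apply/fsubsetP => s /(family_real cF) [X [cX sX _]].
rewrite inE /sigma_set mem_undup; apply/mapP; exists X => //.
by rewrite mem_enum inE cX sF.
Qed.

Lemma foldr_neq0 (R : seq {fset G}) (T : {fset G}) : T != fset0 ->
  (forall B, B \in R -> B != fset0) -> foldr (@sumset G) T R != fset0.
Proof.
move=> T0; elim: R => [|B R IH] //= R0.
have /fset0Pn[b bB] := R0 B (mem_head _ _).
have /fset0Pn[u uU] := IH (fun C CR => R0 C (ltac:(by rewrite inE CR orbT))).
by apply/fset0Pn; exists (b + u); apply: mem_sumset.
Qed.

Lemma chain (R : seq {fset G}) (T : {fset G}) : T != fset0 ->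
  (forall B, B \in R -> B != fset0) -> small G #|` foldr (@sumset G) T R| ->
  (\sum_(B <- R) (#|` B| - 1) + #|` T| <= #|` foldr (@sumset G) T R|)%N.
Proof.
move=> T0; elim: R => [|B R IH] R0 sm; first by rewrite big_nil.
rewrite big_cons /=; rewrite /= in sm.
have R0' : forall C, C \in R -> C != fset0 by move=> C CR; apply: R0; rewrite inE CR orbT.
have B0 : B != fset0 by apply: R0; rewrite inE eqxx.
have U0 := foldr_neq0 T0 R0'.
have /fset0Pn[b bB] := B0.
have cU := card_sumset_ge2 (foldr (@sumset G) T R) bB.
have := IH R0' (small_le sm cU).
have := CD B0 U0 sm.
have := B0; rewrite -cardfs_gt0 => h1 h2 h3; rewrite -addnA; apply: leq_trans (leq_add (leqnn _) h3) _; clia.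
Qed.

Lemma sum_minus1 (R : seq {fset G}) : (forall B, B \in R -> B != fset0) ->
  (\sum_(B <- R) (#|` B| - 1) + size R = \sum_(B <- R) #|` B|)%N.
Proof.
elim: R => [|B R IH] R0; first by rewrite !big_nil.
rewrite !big_cons /=.
have := IH (fun C CR => R0 C (ltac:(by rewrite inE CR orbT))).
have := R0 B (mem_head _ _); rewrite -cardfs_gt0; clia.
Qed.

Lemma key l (R : seq {fset G}) (Y A : {fset G}) :
  (forall B, B \in R ++ [:: Y; A] -> B != fset0) ->
  (forall v, (cntF (R ++ [:: Y; A]) v <= rho a v)%N) ->
  size (R ++ [:: Y; A]) = l ->
  (size (sigma_set l a) + l = \sum_(B <- R ++ [:: Y; A]) #|` B| + 1)%N ->
  small G (size (sigma_set l a)) ->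
  (#|` sumset A Y| + 1 = #|` A| + #|` Y|)%N /\
  (#|` sumset A Y| + \sum_(B <- R) (#|` B| - 1) <= size (sigma_set l a))%N.
Proof.
move=> F0 cF sF sS sm.
have sub := foldr_sub_sigma cF sF.
rewrite foldr_cat /= sumset0r sumsetC in sub.
have cS := fsubset_leq_card sub; rewrite card_sigma in cS.
have R0 : forall B, B \in R -> B != fset0 by move=> B BR; apply: F0; rewrite mem_cat BR.
have Y0 : Y != fset0 by apply: F0; rewrite mem_cat !inE eqxx orbT.
have A0 : A != fset0 by apply: F0; rewrite mem_cat !inE eqxx !orbT.
have T0 : sumset A Y != fset0.
  by case/fset0Pn: A0 => x xA; case/fset0Pn: Y0 => y yY; apply/fset0Pn; exists (x + y); apply: mem_sumset.
have ch := chain T0 R0 (small_le sm cS).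
have smT : small G #|` sumset A Y| by apply: (small_le sm); clia.
have cd := CD A0 Y0 smT.
have sm1 := sum_minus1 R0.
move: sS; rewrite big_cat /= !big_cons big_nil.
move: sF; rewrite size_cat /= => sF.
clia.
Qed.


Lemma sum_nat_count (T : Type) (P : pred T) (r : seq T) :
  (\sum_(k <- r) (P k : nat))%N = count P r.
Proof. by elim: r => [|x r IH]; rewrite ?big_nil // big_cons IH. Qed.

Lemma count_lt_iota n k : count (fun j => (j < n)%N) (iota 0 k) = minn n k.
Proof.
elim: k => [|k IH]; first by rewrite minn0.
rewrite -addn1 iotaD count_cat IH /= add0n; case: (ltnP k n) => kn /=; lia.
Qed.

Lemma sum_count_iota (s : seq G) (f : G -> nat) k :
  (forall x, x \in s -> (f x <= k)%N) ->
  (\sum_(j <- iota 0 k) count (fun x => (j < f x)%N) s = \sum_(x <- s) f x)%N.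
Proof.
elim: s => [|y s IH] fk; first by rewrite big_nil big1 // => j _.
rewrite big_cons /=.
under eq_bigr do rewrite addnC.
rewrite big_split /= sum_nat_count count_lt_iota IH; last first.
  by move=> x xs; apply: fk; rewrite inE xs orbT.
have := fk y (mem_head _ _); lia.
Qed.

Lemma sum_ge (R : seq {fset G}) B : B \in R ->
  (#|` B| - 1 <= \sum_(C <- R) (#|` C| - 1))%N.
Proof.
elim: R => [|C R IH] //; rewrite inE big_cons => /orP[/eqP ->|BR]; first exact: leq_addr.
by apply: leq_trans (IH BR) _; apply: leq_addl.
Qed.

Variable l : nat.

Definition Ak (k : nat) : {fset G} := [fset x in [seq x <- terms a | (k < mu l a x)%N]].

Lemma mem_Ak k x : (x \in Ak k) = (x \in terms a) && (k < mu l a x)%N.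
Proof. by rewrite inE mem_filter andbC. Qed.

Lemma card_Ak k : #|` Ak k| = count (fun x => (k < mu l a x)%N) (terms a).
Proof.
by rewrite card_fseq undup_id ?size_filter // filter_uniq // /terms undup_uniq.
Qed.

Lemma mu_le x : (mu l a x <= l)%N.
Proof. exact: geq_minl. Qed.

Lemma mu_pos x : x \in terms a -> (0 < l)%N -> (0 < mu l a x)%N.
Proof.
rewrite /terms mem_undup => /codomP[i ->] l0.
rewrite /mu /rho leq_min l0 /= card_gt0; apply/set0Pn; exists i; by rewrite inE.
Qed.

Definition Fs := [seq Ak k | k <- rev (iota 0 l)].

Lemma cntF_Fs v : (cntF Fs v <= rho a v)%N.
Proof.
rewrite /cntF /Fs count_map count_rev.
have -> : count (preim Ak (fun B : {fset G} => v \in B)) (iota 0 l) =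
          count (fun k => (v \in terms a) && (k < mu l a v)%N) (iota 0 l).
  by apply: eq_count => k; rewrite /= mem_Ak.
case: (v \in terms a) => /=; last by rewrite count_pred0.
by rewrite count_lt_iota; apply: leq_trans (geq_minl _ _) _; exact: geq_minr.
Qed.

Lemma sum_Fs : (\sum_(B <- Fs) #|` B| = \sum_(x <- terms a) mu l a x)%N.
Proof.
rewrite /Fs big_map big_rev; under eq_bigr do rewrite card_Ak.
by apply: sum_count_iota => x _; apply: mu_le.
Qed.


Lemma main_prog :
  (2 <= l)%N ->
  (forall H : seq G, finite_nontrivial_subgroup H ->
     (size (sigma_set l a) < (if l == 2%N then (size H).-1 else size H))%N) ->
  (exists2 x, x \in terms a & mu l a x = l) ->
  (2 <= count (fun x => 2 <= mu l a x)%N (terms a))%N ->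
  size (sigma_set l a) = ((\sum_(x <- terms a) mu l a x) - l + 1)%N ->
  exists u d, d != 0 /\ [fset x in terms a] = prog u d #|` [fset x in terms a]|.
Proof.
move=> l2 hsub [m0 m0T mum0] hcount hsize.
have l0 : (0 < l)%N by lia.
have A0 : Ak 0 = [fset x in terms a].
  by apply/fsetP => x; rewrite mem_Ak inE; case xT: (x \in terms a); rewrite //= mu_pos.
rewrite -A0.
have AkN : forall k, (k < l)%N -> Ak k != fset0.
  by move=> k kl; apply/fset0Pn; exists m0; rewrite mem_Ak m0T mum0.
have smS : small G (size (sigma_set l a)).
  by move=> H HH; have := hsub H HH; case: (l == 2%N); lia.
have smS2 : l = 2%N -> small G (size (sigma_set l a) + 1).
  by move=> e H HH; have := hsub H HH; rewrite e eqxx; lia.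
have Sge : (l <= \sum_(x <- terms a) mu l a x)%N.
  by rewrite (big_rem m0 m0T) mum0 leq_addr.
have hS : (size (sigma_set l a) + l = \sum_(B <- Fs) #|` B| + 1)%N.
  by rewrite sum_Fs; lia.
set Rs := [seq Ak k | k <- rev (iota 2 (l - 2))].
have Fs_split : Fs = Rs ++ [:: Ak 1; Ak 0].
  rewrite /Fs /Rs; have -> : iota 0 l = iota 0 2 ++ iota 2 (l - 2) by rewrite -iotaD subnKC.
  by rewrite rev_cat map_cat.
have Fs0 : forall B, B \in Fs -> B != fset0.
  by move=> B /mapP[k]; rewrite mem_rev mem_iota add0n => /andP[_ kl] ->; apply: AkN.
have sFs : size Fs = l by rewrite size_map size_rev size_iota.
have c1 : (2 <= #|` Ak 1|)%N by rewrite card_Ak.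
have K1 := key (R := Rs) (Y := Ak 1) (A := Ak 0).
rewrite -Fs_split in K1.
have [K1a K1b] := K1 l Fs0 (@cntF_Fs) sFs hS smS.
have A2 : (2 <= #|` Ak 0|)%N.
  apply: leq_trans c1 _; apply: fsubset_leq_card.
  by apply/fsubsetP => x; rewrite !mem_Ak => /andP[-> h] /=; lia.
case: (leqP #|` Ak 1| 2) => c1'.
  apply: (vosper_two (Y := Ak 1) (AkN 0 l0)); first by clia.
    by rewrite K1a.
  by apply: (small_le smS); clia.
case: (eqVneq l 2%N) => [e|ne].
  apply: (vosper A2 c1 K1a); apply: (small_le (smS2 e)); clia.
have l3 : (3 <= l)%N by lia.
case: (boolP (Ak 1 `<=` Ak 2)) => [sub12|nsub].
  have R2 : Ak 2 \in Rs by apply/mapP; exists 2%N => //; rewrite mem_rev mem_iota; lia.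
  have := sum_ge R2; have := fsubset_leq_card sub12 => h1 h2.
  apply: (vosper A2 c1 K1a); apply: (small_le smS); clia.
case/fsubsetPn: nsub => r r1 r2.
set R3 := [seq Ak k | k <- rev (iota 3 (l - 3))].
have Rs_split : Rs = R3 ++ [:: Ak 2].
  rewrite /Rs /R3; have -> : iota 2 (l - 2) = iota 2 1 ++ iota 3 (l - 3).
    by rewrite -iotaD; congr iota; lia.
  by rewrite rev_cat map_cat.
set Fm := (R3 ++ [:: r |` Ak 2]) ++ [:: Ak 1 `\ r; Ak 0].
have cr2 : #|` r |` Ak 2| = #|` Ak 2|.+1 by rewrite cardfsU1 r2.
have cr1 : #|` Ak 1| = #|` Ak 1 `\ r|.+1 by rewrite (cardfsD1 r) r1.
have Fm0 : forall B, B \in Fm -> B != fset0.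
  move=> B; rewrite /Fm -catA mem_cat => /orP[BR3|].
    by apply: Fs0; rewrite Fs_split Rs_split -catA mem_cat BR3.
  rewrite !inE => /orP[/eqP ->|/orP[/eqP ->|/eqP ->]].
  - by apply/fset0Pn; exists r; rewrite fsetU11.
  - by rewrite -cardfs_gt0; lia.
  - exact: AkN.
have cFm : forall v, (cntF Fm v <= rho a v)%N.
  move=> v; apply: leq_trans (cntF_Fs v).
  rewrite /cntF /Fm Fs_split Rs_split -!catA !count_cat /= in_fset1U in_fsetD1.
  by case: (eqVneq v r) => [->|vr]; rewrite ?r1 ?r2 /=; lia.
have sFm : size Fm = l by rewrite -sFs Fs_split Rs_split /Fm !size_cat.
have hSm : (size (sigma_set l a) + l = \sum_(B <- Fm) #|` B| + 1)%N.
  rewrite hS Fs_split Rs_split /Fm -!catA !big_cat /= !big_cons !big_nil; clia.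
have [K2a K2b] := key Fm0 cFm sFm hSm smS.
have R2 : r |` Ak 2 \in R3 ++ [:: r |` Ak 2] by rewrite mem_cat mem_seq1 eqxx orbT.
have := sum_ge R2 => h2.
have Y2 : (2 <= #|` Ak 1 `\ r|)%N by lia.
apply: (vosper A2 Y2 K2a); apply: (small_le smS); clia.
Qed.

End Main.

Local Close Scope fset_scope.
Unset Implicit Arguments. Set Strict Implicit. Set Printing Implicit Defensive.

Theorem theorem6p8 (G : zmodType) (l m : nat) (a : 'I_m -> G) :
  (2 <= l)%N -> (l <= m)%N ->
  (* |Sigma^l(a)| < p(G) - 1 if l = 2, < p(G) if l >= 3, where p(G) is the
     least order of a nontrivial subgroup (infinite if none): this is
     expressed as a bound against every finite nontrivial subgroup *)
  (forall H : seq G, finite_nontrivial_subgroup H ->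
     (size (sigma_set l a) < (if l == 2%N then (size H).-1 else size H))%N) ->
  (exists2 x, x \in terms a & mu l a x = l) ->
  (2 <= count (fun x => 2 <= mu l a x)%N (terms a))%N ->
  size (sigma_set l a) = ((\sum_(x <- terms a) mu l a x) - l + 1)%N ->
  is_AP (terms a).
Proof.
move=> l2 lm hsub hmax hcount hsize.
have [u [d [d0 E]]] := @main_prog G m a l l2 hsub hmax hcount hsize.
have P : forall y, reflect (exists2 j, (j < #|` [fset x in terms a]%fset|)%N & y = u + d *+ j)
    (y \in [fset x in terms a]%fset).
  by move=> y; have := progP u d #|` [fset x in terms a]%fset| y; rewrite -E.
exists u, d, #|` [fset x in terms a]%fset|; split => // x.
have -> : (x \in terms a) = (x \in [fset x in terms a]%fset) by rewrite inE.
by split => [/P|/P].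
Qed.
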